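(* Let $\Delta\ge1$, $\beta\ge0$, $\eta\in[0,1)$, and let $G$ be a finite graph of maximum degree at most $\Delta$. If $\lambda>0$ is such that $\eta_G(\beta,\lambda)=\eta$, then \[1\le\lambda\le\sqrt{\frac{1+\eta}{1-\eta}}\,e^{\beta\Delta/2}.\]
   Context: The Ising model on $G$ at inverse temperature $\beta$ and activity $\lambda>0$ is $\mu_{G,\beta,\lambda}(\sigma)\propto e^{\frac{\beta}{2}\sum_{uv\in E(G)}\sigma_u\sigma_v}\lambda^{M(\sigma)}$ on $\{\pm1\}^{V(G)}$ with $M(\sigma)=\sum_v\sigma_v$; the mean magnetization is $\eta_G(\beta,\lambda)=\mathbb{E}_{\mu_{G,\beta,\lambda}}[M(\sigma)]/|V(G)|$. *)

(* Defs.v *)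
From HB Require Import structures.
From mathcomp Require Import all_boot all_order all_algebra.
From mathcomp Require Import all_classical all_reals all_analysis.
Set Implicit Arguments. Unset Strict Implicit. Unset Printing Implicit Defensive.
Import Order.TTheory GRing.Theory Num.Theory.
Local Open Scope ring_scope.

Definition simple_graph (T : finType) (e : rel T) : Prop :=
  symmetric e /\ irreflexive e.

Definition max_deg_le (T : finType) (e : rel T) (D : nat) : Prop :=
  forall x : T, (#|[set y | e x y]| <= D)%N.

Definition spin (T : finType) (s : {ffun T -> bool}) (v : T) : int :=
  if s v then 1 else -1.

Definition magn (T : finType) (s : {ffun T -> bool}) : int :=
  \sum_(v : T) spin s v.

(* sum over (unordered) edges uv of sigma_u sigma_v; each edge counted once,
   i.e. half the sum over ordered adjacent pairs *)
Definition edge_sum (R : realType) (T : finType) (e : rel T)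
    (s : {ffun T -> bool}) : R :=
  (\sum_(u : T) \sum_(v : T | e u v) (spin s u * spin s v)%:~R) / 2.

Definition ising_weight (R : realType) (T : finType) (e : rel T)
    (beta lam : R) (s : {ffun T -> bool}) : R :=
  expR (beta / 2 * edge_sum R e s) * lam ^ (magn s).

Definition partition_fn (R : realType) (T : finType) (e : rel T) (beta lam : R) : R :=
  \sum_(s : {ffun T -> bool}) ising_weight e beta lam s.

Definition mean_magn (R : realType) (T : finType) (e : rel T) (beta lam : R) : R :=
  (\sum_(s : {ffun T -> bool}) ising_weight e beta lam s * (magn s)%:~R)
  / partition_fn e beta lam / (#|T|)%:R.

(* Main.v *)
Require Import Defs.
From HB Require Import structures.
From mathcomp Require Import all_boot all_order all_algebra.
From mathcomp Require Import all_classical all_reals all_analysis.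
From mathcomp Require Import ring lra.
Import Order.TTheory GRing.Theory Num.Theory.
Set Implicit Arguments. Unset Strict Implicit. Unset Printing Implicit Defensive.
Local Open Scope ring_scope.

Definition flipv (T : finType) (s : {ffun T -> bool}) (v : T) : {ffun T -> bool} :=
  [ffun x => if x == v then ~~ s x else s x].
Definition complf (T : finType) (s : {ffun T -> bool}) : {ffun T -> bool} :=
  [ffun x => ~~ s x].

Lemma flipvK (T : finType) (v : T) : involutive (fun s => flipv s v).
Proof. move=> s; apply/ffunP=> x; rewrite !ffunE; by case: (x == v); rewrite ?negbK. Qed.

Lemma complfK (T : finType) : involutive (@complf T).
Proof. move=> s; apply/ffunP=> x; by rewrite !ffunE negbK. Qed.

Lemma magn_flipv (T : finType) (s : {ffun T -> bool}) v :
  s v = false -> magn (flipv s v) = magn s + 2.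
Proof.
move=> sv; rewrite /magn (bigD1 v) //= [in RHS](bigD1 v) //=.
rewrite [X in _ + X = _](eq_bigr (fun i => spin s i)); last first.
  by move=> i /negbTE iv; rewrite /spin ffunE iv.
rewrite /spin ffunE eqxx sv /=; ring.
Qed.

Lemma magn_complf (T : finType) (s : {ffun T -> bool}) : magn (complf s) = - magn s.
Proof. rewrite /magn -sumrN; apply: eq_bigr => i _; rewrite /spin ffunE; by case: (s i). Qed.

Lemma edge_sum_complf (R : realType) (T : finType) e (s : {ffun T -> bool}) :
  edge_sum R e (complf s) = edge_sum R e s.
Proof.
rewrite /edge_sum; congr (_ / 2); apply: eq_bigr => u _; apply: eq_bigr => w _.
by rewrite /spin !ffunE; case: (s u); case: (s w).
Qed.

Lemma spinR (R : realType) (T : finType) (s : {ffun T -> bool}) u :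
  (spin s u)%:~R = (if s u then 1 else -1 : R).
Proof. by rewrite /spin; case: (s u); rewrite ?rmorphN /=. Qed.

Lemma term_bound (R : realType) (T : finType) (s : {ffun T -> bool}) v u w :
  - 2 * (((u == v)%:R : R) + (w == v)%:R) <=
  (spin (flipv s v) u * spin (flipv s v) w)%:~R - (spin s u * spin s w)%:~R.
Proof.
rewrite !intrM !spinR !ffunE.
case: (u == v); case: (w == v); case: (s u); case: (s w) => /=; lra.
Qed.

Lemma degA (R : realType) (T : finType) (e : rel T) v :
  \sum_u \sum_(w | e u w) ((u == v)%:R : R) = \sum_(w | e v w) 1.
Proof.
rewrite (bigD1 v) //= [X in _ + X]big1 ?addr0.
  by apply: eq_bigr => w _; rewrite eqxx.
by move=> u /negbTE uv; apply: big1 => w _; rewrite uv.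
Qed.

Lemma degB (R : realType) (T : finType) (e : rel T) v :
  symmetric e ->
  \sum_u \sum_(w | e u w) ((w == v)%:R : R) = \sum_(w | e v w) 1.
Proof.
move=> se.
transitivity (\sum_u ((e u v)%:R : R)).
  apply: eq_bigr => u _; rewrite big_mkcond (bigD1 v) //= [X in _ + X]big1 ?addr0.
    by case: (e u v) => /=; rewrite ?eqxx.
  by move=> w /negbTE ->; case: (e u w).
rewrite [RHS]big_mkcond; apply: eq_bigr => u _; rewrite se; by case: (e v u).
Qed.

Lemma deg_le (R : realType) (T : finType) (e : rel T) (D : nat) v :
  max_deg_le e D -> \sum_(w | e v w) (1 : R) <= D%:R.
Proof.
move=> md.
have -> : \sum_(w | e v w) (1 : R) = (\sum_(w | e v w) 1%N)%:R by rewrite natr_sum.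
rewrite ler_nat.
have := md v; rewrite cardsE.
have -> : (\sum_(w | e v w) 1)%N = #|[pred w | e v w]| by rewrite -sum1_card.
by [].
Qed.

Lemma edge_flip (R : realType) (T : finType) (e : rel T) (D : nat) (s : {ffun T -> bool}) v :
  symmetric e -> max_deg_le e D ->
  edge_sum R e s - 2 * D%:R <= edge_sum R e (flipv s v).
Proof.
move=> se md; rewrite /edge_sum.
set S := \sum_u _; set S' := \sum_u _.
have H : \sum_u \sum_(w | e u w) (-2 * (((u == v)%:R : R) + (w == v)%:R)) <= S' - S.
  rewrite /S /S' -sumrB; apply: ler_sum => u _; rewrite -sumrB; apply: ler_sum => w _.
  exact: term_bound.
have E : \sum_u \sum_(w | e u w) (-2 * (((u == v)%:R : R) + (w == v)%:R)) =
   -2 * (\sum_u \sum_(w | e u w) ((u == v)%:R : R) + \sum_u \sum_(w | e u w) ((w == v)%:R : R)).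
  rewrite [RHS]mulrC -big_split /= mulr_suml; apply: eq_bigr => u _.
  by rewrite -big_split /= mulr_suml; apply: eq_bigr => w _; rewrite mulrC.
rewrite E degA degB // in H.
have := deg_le R v md.
lra.
Qed.

Lemma weight_flip (R : realType) (T : finType) (e : rel T) (D : nat) (beta lam : R)
   (s : {ffun T -> bool}) v :
  symmetric e -> max_deg_le e D -> 0 <= beta -> 0 < lam -> s v = false ->
  ising_weight e beta lam s * (lam ^+ 2 * expR (- (beta * D%:R)))
   <= ising_weight e beta lam (flipv s v).
Proof.
move=> se md hb hl sv; rewrite /ising_weight magn_flipv // expfzDr ?gt_eqF //.
have h1 := edge_flip R s v se md.
have h2 : beta / 2 * edge_sum R e s - beta * D%:R <= beta / 2 * edge_sum R e (flipv s v).
  have : 0 <= beta / 2 by apply: divr_ge0.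
  nra.
have hp : 0 < lam ^ magn s by apply: exprz_gt0.
have hq : 0 < lam ^+ 2 by apply: exprn_gt0.
have h3 : expR (beta / 2 * edge_sum R e s - beta * D%:R) <= expR (beta / 2 * edge_sum R e (flipv s v)) by rewrite ler_expR.
move: h3; rewrite expRD => h3.
change (lam ^ (2%:Z)) with (lam ^+ 2).
have he : 0 <= expR (beta / 2 * edge_sum R e s) * expR (- (beta * D%:R)).
  by rewrite mulr_ge0 // expR_ge0.
have : 0 <= lam ^ magn s * lam ^+ 2 by rewrite mulr_ge0 // ltW.
move: h3; set a := expR _; set b := expR _; set c := expR _ => h3 h4.
rewrite -[X in X <= _](_ : (a * b) * (lam ^ magn s * lam ^+ 2) = _); last by ring.
by apply: ler_wpM2r.
Qed.

Lemma weight_gt0 (R : realType) (T : finType) (e : rel T) (beta lam : R) s :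
  0 < lam -> 0 < ising_weight e beta lam s.
Proof. by move=> hl; rewrite /ising_weight mulr_gt0 ?expR_gt0 ?exprz_gt0. Qed.

Lemma Z_gt0 (R : realType) (T : finType) (e : rel T) (beta lam : R) :
  0 < lam -> 0 < partition_fn e beta lam.
Proof.
move=> hl; rewrite /partition_fn (bigD1 [ffun=> true]) //=.
have := weight_gt0 e beta [ffun=> true] hl.
have : 0 <= \sum_(i | i != [ffun=> true]) ising_weight e beta lam i.
  by apply: sumr_ge0 => i _; apply: ltW; apply: weight_gt0.
lra.
Qed.

Lemma Z_split (R : realType) (T : finType) (e : rel T) (beta lam : R) v :
  partition_fn e beta lam = \sum_(s : {ffun T -> bool} | s v) ising_weight e beta lam s
     + \sum_(s : {ffun T -> bool} | ~~ s v) ising_weight e beta lam s.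
Proof. by rewrite /partition_fn (bigID (fun s : {ffun T -> bool} => s v)). Qed.

Lemma A_split (R : realType) (T : finType) (e : rel T) (beta lam : R) :
  \sum_(s : {ffun T -> bool}) ising_weight e beta lam s * (magn s)%:~R =
  \sum_v (\sum_(s : {ffun T -> bool} | s v) ising_weight e beta lam s
     - \sum_(s : {ffun T -> bool} | ~~ s v) ising_weight e beta lam s).
Proof.
under eq_bigr => s _ do rewrite /magn rmorph_sum mulr_sumr.
rewrite exchange_big; apply: eq_bigr => v _.
rewrite (bigID (fun s : {ffun T -> bool} => s v)) /=; congr (_ + _).
  by apply: eq_bigr => s sv; rewrite /spin sv mulr1.
by rewrite -sumrN; apply: eq_bigr => s /negbTE sv; rewrite /spin sv mulrN1.
Qed.

Lemma PN_rel (R : realType) (T : finType) (e : rel T) (D : nat) (beta lam : R) v :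
  symmetric e -> max_deg_le e D -> 0 <= beta -> 0 < lam ->
  (lam ^+ 2 * expR (- (beta * D%:R))) * \sum_(s : {ffun T -> bool} | ~~ s v) ising_weight e beta lam s
   <= \sum_(s : {ffun T -> bool} | s v) ising_weight e beta lam s.
Proof.
move=> se md hb hl.
rewrite [X in _ <= X](reindex_inj (can_inj (flipvK v))).
have -> : \sum_(j : {ffun T -> bool} | flipv j v v) ising_weight e beta lam (flipv j v)
   = \sum_(j : {ffun T -> bool} | ~~ j v) ising_weight e beta lam (flipv j v).
  by apply: eq_bigl => j; rewrite ffunE eqxx.
rewrite mulr_sumr; apply: ler_sum => s /negbTE sv; rewrite mulrC.
exact: weight_flip.
Qed.

Lemma fsign (R : realType) (lam : R) (m : int) :
  0 < lam -> lam < 1 -> (lam ^ m - lam ^ (- m)) * m%:~R <= 0.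
Proof.
move=> h0 h1.
have key : forall n : nat, (lam ^ (n%:Z) - lam ^ (- n%:Z)) * (n%:Z)%:~R <= 0.
  move=> n; rewrite -exprnN.
  change (lam ^ (n%:Z)) with (lam ^+ n).
  have hx : 0 < lam ^+ n by apply: exprn_gt0.
  have hx1 : lam ^+ n <= 1 by apply: exprn_ile1; [apply: ltW|apply: ltW].
  have hy : 1 <= (lam ^+ n)^-1 by rewrite invr_ge1 ?unitfE ?gt_eqF.
  have hn : 0 <= (n%:Z)%:~R :> R by rewrite ler0z.
  nra.
case: m => n; first exact: key.
rewrite NegzE opprK.
have := key n.+1.
rewrite rmorphN /=.
nra.
Qed.

Lemma fsign_strict (R : realType) (lam : R) (n : nat) :
  0 < lam -> lam < 1 -> (0 < n)%N -> (lam ^ (n%:Z) - lam ^ (- n%:Z)) * (n%:Z)%:~R < 0.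
Proof.
move=> h0 h1 hn0; rewrite -exprnN.
change (lam ^ (n%:Z)) with (lam ^+ n).
have hx : 0 < lam ^+ n by apply: exprn_gt0.
have hx1 : lam ^+ n < 1 by rewrite exprn_ilt1 ?ltW // -lt0n.
have hy : 1 <= (lam ^+ n)^-1 by rewrite invr_ge1 ?unitfE ?gt_eqF // ltW.
have hn : 0 < (n%:Z)%:~R :> R by rewrite ltr0z.
nra.
Qed.

Lemma magn_true (T : finType) : magn [ffun _ : T => true] = #|T|%:Z.
Proof.
rewrite /magn; under eq_bigr do rewrite /spin ffunE /=.
by rewrite sumr_const -natz.
Qed.

Theorem lemma17 (R : realType) (T : finType) (e : rel T) (D : nat)
    (beta eta lam : R) :
  (0 < #|T|)%N -> simple_graph e -> max_deg_le e D -> (1 <= D)%N ->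
  0 <= beta -> 0 <= eta -> eta < 1 -> 0 < lam ->
  mean_magn e beta lam = eta ->
  1 <= lam /\
  lam <= Num.sqrt ((1 + eta) / (1 - eta)) * expR (beta * D%:R / 2).
Proof.
move=> hT [se _] md _ hb he0 he1 hl heq.
set w := ising_weight e beta lam.
set A := \sum_(s : {ffun T -> bool}) w s * (magn s)%:~R.
set Z := partition_fn e beta lam.
set n := (#|T|)%:R : R.
have hZ : 0 < Z by apply: Z_gt0.
have hn : 0 < n by rewrite ltr0n.
have hA : A = eta * (Z * n).
  rewrite -heq /mean_magn -/w -/A -/Z -/n; field.
  by rewrite gt_eqF // gt_eqF.
split.
  rewrite leNgt; apply/negP => hl1.
  have hc : A = - \sum_(s : {ffun T -> bool}) w (complf s) * (magn s)%:~R.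
    rewrite /A (reindex_inj (can_inj (@complfK T))) -sumrN.
    by apply: eq_bigr => s _; rewrite magn_complf rmorphN mulrN.
  have h2 : A + A = \sum_(s : {ffun T -> bool}) expR (beta / 2 * edge_sum R e s) *
      ((lam ^ magn s - lam ^ (- magn s)) * (magn s)%:~R).
    rewrite {2}hc /A -sumrB; apply: eq_bigr => s _.
    rewrite /w /ising_weight edge_sum_complf magn_complf; ring.
  have hneg : A + A < 0.
    rewrite h2 (bigD1 [ffun=> true]) //=.
    have h3 : expR (beta / 2 * edge_sum R e [ffun=> true]) *
      ((lam ^ magn [ffun _ : T => true] - lam ^ (- magn [ffun _ : T => true])) *
        (magn [ffun _ : T => true])%:~R) < 0.
      rewrite pmulr_rlt0 ?expR_gt0 // magn_true; exact: fsign_strict.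
    have h4 : \sum_(i | i != [ffun=> true]) expR (beta / 2 * edge_sum R e i) *
      ((lam ^ magn i - lam ^ (- magn i)) * (magn i)%:~R) <= 0.
      apply: sumr_le0 => s _; apply: mulr_ge0_le0; first exact: ltW (expR_gt0 _).
      exact: fsign.
    lra.
  have : 0 <= A by rewrite hA mulr_ge0 // mulr_ge0 // ltW.
  lra.
set r := lam ^+ 2 * expR (- (beta * D%:R)).
have hv : forall v, r * (Z - (\sum_(s : {ffun T -> bool} | s v) w s - \sum_(s : {ffun T -> bool} | ~~ s v) w s))
   <= Z + (\sum_(s : {ffun T -> bool} | s v) w s - \sum_(s : {ffun T -> bool} | ~~ s v) w s).
  move=> v; have := PN_rel v se md hb hl; rewrite -/w -/r => h.
  rewrite /Z (Z_split e beta lam v) -/w.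
  set P := \sum_(s : {ffun T -> bool} | s v) w s in h *.
  set N := \sum_(s : {ffun T -> bool} | ~~ s v) w s in h *.
  have -> : r * (P + N - (P - N)) = 2 * (r * N) by ring.
  lra.
have hs := @ler_sum _ _ (index_enum T) xpredT _ _ (fun v _ => hv v).
have hA' : \sum_v (\sum_(s : {ffun T -> bool} | s v) w s - \sum_(s : {ffun T -> bool} | ~~ s v) w s) = A.
  by rewrite /A /w A_split.
rewrite -mulr_sumr sumrB hA' big_split /= hA' sumr_const -/n -mulr_natr -/n in hs.
have hK : 0 < Z * n by apply: mulr_gt0.
have h1 : r * (1 - eta) <= 1 + eta.
  rewrite -(ler_pM2r hK); rewrite hA in hs; move: hs.
  set K := Z * n.
  have -> : r * (1 - eta) * K = r * (K - eta * K) by ring.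
  lra.
have h2 : r <= (1 + eta) / (1 - eta) by rewrite ler_pdivlMr // subr_gt0.
have h3 : lam ^+ 2 <= (1 + eta) / (1 - eta) * expR (beta * D%:R).
  rewrite -[lam ^+ 2](_ : r * expR (beta * D%:R) = _); last first.
    by rewrite /r -mulrA -expRD addNr expR0 mulr1.
  by rewrite ler_pM2r ?expR_gt0.
have hE : expR (beta * D%:R) = expR (beta * D%:R / 2) ^+ 2.
  by rewrite expr2 -expRD; congr expR; field.
have hq : 0 <= (1 + eta) / (1 - eta) by apply: divr_ge0; lra.
have -> : lam = Num.sqrt (lam ^+ 2) by rewrite sqrtr_sqr gtr0_norm.
rewrite -[X in _ <= _ * X](gtr0_norm (expR_gt0 (beta * D%:R / 2))) -sqrtr_sqr.
rewrite -sqrtrM // ler_sqrt; last by rewrite mulr_ge0 // sqr_ge0.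
by rewrite -hE.
Qed.
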